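(* Let $H$ be the real vector space of Hermitian matrices on a finite-dimensional system with inner product $\langle A,B\rangle=\mathrm{Tr}(AB)$. Let $\mathcal{K}\subset H$ be a proper convex cone (closed, convex, pointed, with nonempty interior) and $\mathcal{F}\subset H$ a compact set such that $\{\lambda Z:0\le\lambda\le1,\ Z\in\mathcal{F}\}$ is convex and $\mathcal{F}\cap\mathrm{int}(\mathcal{K})\neq\emptyset$. Define $R^{\mathcal{F}}_{\mathcal{K}}(\mathcal{E}):=\inf\{\lambda\in\mathbb{R}_+:\ (\mathcal{E}+\lambda\mathcal{E}')/(1+\lambda)\in\mathcal{F},\ \mathcal{E}'\in\mathcal{K}\}$ for $\mathcal{E}\in H$, and $\mathcal{N}:=\{\mathcal{E}\in H:\ \delta Z-\mathcal{E}\notin\mathcal{K}\ \ \forall\delta<1,\ Z\in\mathcal{F}\}$. If $\mathcal{E}\in\mathcal{N}$, then $$1+R^{\mathcal{F}}_{\mathcal{K}}(\mathcal{E})=\max\{\langle\varphi,\mathcal{E}\rangle:\ \varphi\in\mathcal{K}^*,\ \langle\varphi,Z\rangle\le1\ \ \forall Z\in\mathcal{F}\}.$$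
   Context: $\mathcal{K}^*:=\{\varphi\in H:\langle\varphi,x\rangle\ge0\ \forall x\in\mathcal{K}\}$ is the dual cone; $\mathrm{int}$ denotes interior; $\mathbb{R}_+$ the nonnegative reals. *)

(* Defs.v *)
From HB Require Import structures.
From mathcomp Require Import all_boot all_order all_algebra.
From mathcomp Require Import complex.
From mathcomp Require Import boolp classical_sets reals constructive_ereal ereal.
Set Implicit Arguments. Unset Strict Implicit. Unset Printing Implicit Defensive.
Import Order.TTheory GRing.Theory Num.Theory.
Local Open Scope ring_scope.
Local Open Scope classical_set_scope.

Section Herm.
Variables (R : realType) (n : nat).
Local Notation C := (R[i]).
Local Notation M := ('M[C]_n).

Definition herm (A : M) : Prop := map_mx (@Num.conj C) A^T = A.

Definition Hset : set M := [set A | herm A].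

(* inner product <A,B> = Tr(AB) (real for Hermitian A,B; we take its real part) *)
Definition ip (A B : M) : R := complex.Re (\tr (A *m B)).

Definition rscale (t : R) (A : M) : M := (t%:C)%C *: A.

Definition dist (A B : M) : R := Num.sqrt (ip (A - B) (A - B)).

Definition closedH (S : set M) : Prop :=
  forall A, herm A ->
    (forall e : R, 0 < e -> exists2 B, S B & dist A B < e) -> S A.

Definition interiorH (S : set M) : set M :=
  [set A | herm A /\ exists2 e : R, 0 < e &
     forall B, herm B -> dist A B < e -> S B].

Definition cvgH (u : nat -> M) (L : M) : Prop :=
  forall e : R, 0 < e -> exists N, forall k, (N <= k)%N -> dist (u k) L < e.

Definition compactH (S : set M) : Prop :=
  S `<=` Hset /\
  forall u : nat -> M, (forall k, S (u k)) ->
    exists phi : nat -> nat, (forall k, (phi k < phi k.+1)%N) /\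
      exists2 L, S L & cvgH (u \o phi) L.

Definition convexH (S : set M) : Prop :=
  forall A B t, S A -> S B -> 0 <= t -> t <= 1 ->
    S (rscale t A + rscale (1 - t) B).

Definition coneH (S : set M) : Prop :=
  forall A t, S A -> 0 <= t -> S (rscale t A).

Definition pointedH (S : set M) : Prop :=
  forall A, S A -> S (- A) -> A = 0.

Definition proper_cone (K : set M) : Prop :=
  [/\ K `<=` Hset, coneH K, closedH K, convexH K
    & pointedH K /\ exists A, interiorH K A].

Definition dual_cone (K : set M) : set M :=
  [set phi | herm phi /\ forall x, K x -> 0 <= ip phi x].

Definition downscale (F : set M) : set M :=
  [set A | exists l Z, (0 <= l) /\ (l <= 1) /\ F Z /\ A = rscale l Z].

Definition robustness (K F : set M) (E : M) : \bar R :=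
  ereal_inf [set (l%:E)%E | l in
    [set l : R | 0 <= l /\ exists2 E', K E' &
        F (rscale (1 + l)^-1 (E + rscale l E'))]].

Definition Nset (K F : set M) : set M :=
  [set E | herm E /\ forall (d : R) Z, d < 1 -> F Z -> ~ K (rscale d Z - E)].

End Herm.

(* Main.v *)
Require Import Defs.
From HB Require Import structures.
From mathcomp Require Import all_boot all_order all_algebra.
From mathcomp Require Import complex.
From mathcomp Require Import boolp classical_sets reals constructive_ereal ereal.
From mathcomp Require Import ring lra.
Import Order.TTheory GRing.Theory Num.Theory.
Set Implicit Arguments. Unset Strict Implicit. Unset Printing Implicit Defensive.
Local Open Scope ring_scope.
Local Open Scope classical_set_scope.

Section P1.
Variables (R : realType) (n : nat).
Local Notation C := (R[i]).
Local Notation M := ('M[C]_n).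

Lemma rcD (a b : R) : ((a + b)%:C)%C = (a%:C + b%:C)%C :> C.
Proof. exact: rmorphD. Qed.
Lemma rcM (a b : R) : ((a * b)%:C)%C = (a%:C * b%:C)%C :> C.
Proof. exact: rmorphM. Qed.

Lemma conjE (z : C) : Num.conj z = Complex (complex.Re z) (- complex.Im z).
Proof.
have := conjC_rect (Creal_Re z) (Creal_Im z); rewrite -Crect => ->.
rewrite -complexRe -complexIm -complexiE.
by case: z => a b /=; simpc.
Qed.

Lemma ReJ (z : C) : complex.Re (Num.conj z) = complex.Re z.
Proof. by rewrite conjE. Qed.

Lemma ReD (x y : C) : complex.Re (x + y) = complex.Re x + complex.Re y.
Proof. by case: x => ? ?; case: y. Qed.

Lemma ReZ (t : R) (x : C) : complex.Re ((t%:C)%C * x) = t * complex.Re x.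
Proof. by case: x => a b /=; rewrite mul0r subr0. Qed.


Lemma ImJ (z : C) : complex.Im (Num.conj z) = - complex.Im z.
Proof. by rewrite conjE. Qed.

Lemma conj_real (t : R) : Num.conj ((t%:C)%C : C) = (t%:C)%C.
Proof. by rewrite conjE /= oppr0. Qed.

Lemma rscaleDr t (A B : M) : rscale t (A + B) = rscale t A + rscale t B.
Proof. exact: scalerDr. Qed.
Lemma rscaleDl s t (A : M) : rscale (s + t) A = rscale s A + rscale t A.
Proof. by rewrite /rscale rcD scalerDl. Qed.
Lemma rscaleA s t (A : M) : rscale s (rscale t A) = rscale (s * t) A.
Proof. by rewrite /rscale rcM scalerA. Qed.
Lemma rscale1 (A : M) : rscale 1 A = A.
Proof. by rewrite /rscale scale1r. Qed.
Lemma rscale0 (A : M) : rscale 0 A = 0.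
Proof. by rewrite /rscale scale0r. Qed.
Lemma rscaler0 t : rscale t (0 : M) = 0.
Proof. by rewrite /rscale scaler0. Qed.
Lemma rscaleN t (A : M) : rscale (- t) A = - rscale t A.
Proof. by rewrite /rscale rmorphN scaleNr. Qed.
Lemma rscaleNr t (A : M) : rscale t (- A) = - rscale t A.
Proof. by rewrite /rscale scalerN. Qed.
Lemma rscaleBr t (A B : M) : rscale t (A - B) = rscale t A - rscale t B.
Proof. by rewrite rscaleDr rscaleNr. Qed.
Lemma rscaleN1 (A : M) : rscale (-1) A = - A.
Proof. by rewrite rscaleN rscale1. Qed.
Lemma rscale_sum (I : Type) (s : seq I) (F : I -> M) t :
  rscale t (\sum_(j <- s) F j) = \sum_(j <- s) rscale t (F j).
Proof. exact: scaler_sumr. Qed.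

Lemma ipDr (A B D : M) : ip A (B + D) = ip A B + ip A D.
Proof. by rewrite /ip mulmxDr mxtraceD ReD. Qed.
Lemma ipDl (A B D : M) : ip (A + B) D = ip A D + ip B D.
Proof. by rewrite /ip mulmxDl mxtraceD ReD. Qed.
Lemma ipZr t (A B : M) : ip A (rscale t B) = t * ip A B.
Proof. by rewrite /ip /rscale -scalemxAr mxtraceZ ReZ. Qed.
Lemma ipZl t (A B : M) : ip (rscale t A) B = t * ip A B.
Proof. by rewrite /ip /rscale -scalemxAl mxtraceZ ReZ. Qed.
Lemma ip0l (B : M) : ip 0 B = 0.
Proof. by rewrite -(rscale0 0) ipZl mul0r. Qed.
Lemma ipNr (A B : M) : ip A (- B) = - ip A B.
Proof. by rewrite -rscaleN1 ipZr mulN1r. Qed.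
Lemma ipBr (A B D : M) : ip A (B - D) = ip A B - ip A D.
Proof. by rewrite ipDr ipNr. Qed.
Lemma ip_suml (I : Type) (s : seq I) (F : I -> M) X :
  ip (\sum_(j <- s) F j) X = \sum_(j <- s) ip (F j) X.
Proof.
elim: s => [|a s IH]; first by rewrite !big_nil ip0l.
by rewrite !big_cons ipDl IH.
Qed.

Definition adj (A : M) : M := map_mx (@Num.conj C) A^T.
Lemma hermE (A : M) : herm A <-> adj A = A. Proof. by []. Qed.
Lemma adjE (A : M) i j : adj A i j = Num.conj (A j i).
Proof. by rewrite !mxE. Qed.
Lemma adjD (A B : M) : adj (A + B) = adj A + adj B.
Proof. by apply/matrixP => i j; rewrite !mxE rmorphD. Qed.
Lemma adj0 : adj 0 = 0.
Proof. by apply/matrixP => i j; rewrite !mxE rmorph0. Qed.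
Lemma adjN (A : M) : adj (- A) = - adj A.
Proof. by apply/matrixP => i j; rewrite !mxE rmorphN. Qed.
Lemma adjZ t (A : M) : adj (rscale t A) = rscale t (adj A).
Proof.
apply/matrixP => i j; rewrite !mxE !conjE; case: (A j i) => a b /=.
by simpc; rewrite ?mulrN.
Qed.
Lemma adjK (A : M) : adj (adj A) = A.
Proof. by apply/matrixP => i j; rewrite !mxE conjCK. Qed.
Lemma adj_delta (c : C) a b : adj (c *: delta_mx a b) = Num.conj c *: delta_mx b a.
Proof.
apply/matrixP => i j; rewrite !mxE rmorphM; congr (_ * _).
by rewrite andbC; case: (_ && _); rewrite ?rmorph1 ?rmorph0.
Qed.
Lemma hermD (A B : M) : herm A -> herm B -> herm (A + B).
Proof. by rewrite !hermE adjD => -> ->. Qed.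
Lemma hermZ t (A : M) : herm A -> herm (rscale t A).
Proof. by rewrite !hermE adjZ => ->. Qed.
Lemma hermN (A : M) : herm A -> herm (- A).
Proof. by rewrite !hermE adjN => ->. Qed.
Lemma hermB (A B : M) : herm A -> herm B -> herm (A - B).
Proof. by move=> hA hB; apply: hermD => //; apply: hermN. Qed.
Lemma herm0 : herm (0 : M).
Proof. exact: adj0. Qed.
Lemma herm_sum (I : Type) (s : seq I) (F : I -> M) :
  (forall j, herm (F j)) -> herm (\sum_(j <- s) F j).
Proof.
move=> hF; elim: s => [|a s IH]; first by rewrite big_nil; exact: herm0.
by rewrite big_cons; apply: hermD.
Qed.
Lemma hermP (X : M) i j : herm X -> X j i = Num.conj (X i j).
Proof. by move=> hX; rewrite -{1}hX !mxE. Qed.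

Lemma ip_delta (c : C) a b (X : M) : ip (c *: delta_mx a b) X = complex.Re (c * X b a).
Proof.
rewrite /ip -scalemxAl mxtraceZ; congr (complex.Re (_ * _)).
rewrite /mxtrace (bigD1 a) //= big1 => [|i ia].
  rewrite addr0 !mxE (bigD1 b) //= big1 => [|k kb]; first by rewrite mxE !eqxx mul1r addr0.
  by rewrite mxE eqxx (negbTE kb) /= mul0r.
rewrite !mxE big1 // => k _; by rewrite !mxE (negbTE ia) mul0r.
Qed.


Section HB.
Variable p : M -> R.
Hypothesis pD : forall x y : M, herm x -> herm y -> p (x + y) <= p x + p y.
Hypothesis pZ : forall t (x : M), 0 <= t -> herm x -> p (rscale t x) = t * p x.

Lemma p0 : p 0 = 0.
Proof. by rewrite -(rscale0 0) pZ ?mul0r //; exact: herm0. Qed.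

Lemma hb_step (P : R -> M -> Prop) (y : M) :
  P 0 0 ->
  (forall g v g' v', P g v -> P g' v' -> P (g + g') (v + v')) ->
  (forall r g v, 0 < r -> P g v -> P (r * g) (rscale r v)) ->
  (forall g v, P g v -> herm v) ->
  (forall g v, P g v -> g <= p v) ->
  herm y ->
  exists c, forall g v t, P g v -> g + t * c <= p (v + rscale t y).
Proof.
move=> P00 PD PZ Ph Pp hy.
have key : forall g v g' v', P g v -> P g' v' -> g - p (v - y) <= p (v' + y) - g'.
  move=> g v g' v' Pgv Pgv'.
  have h1 := Pp _ _ (PD _ _ _ _ Pgv Pgv').
  have e1 : v + v' = (v - y) + (v' + y) by rewrite addrACA addNr addr0.
  rewrite e1 in h1.
  have h2 := pD (hermB (Ph _ _ Pgv) hy) (hermD (Ph _ _ Pgv') hy).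
  have h := le_trans h1 h2; lra.
pose A := [set x | exists g v, P g v /\ x = g - p (v - y)].
have A0 : A !=set0 by exists (0 - p (0 - y)); exists 0, 0.
have Aub : ubound A (p (0 + y) - 0).
  by move=> x [g [v [Pgv ->]]]; apply: key.
have hsA : has_sup A by split => //; exists (p (0 + y) - 0).
exists (sup A) => g v t Pgv.
have cle : forall g' v', P g' v' -> sup A <= p (v' + y) - g'.
  move=> g' v' Pgv'; apply: ge_sup => // x [g1 [v1 [P1 ->]]]; exact: key.
have cge : forall g v, P g v -> g - p (v - y) <= sup A.
  by move=> g1 v1 P1; apply: sup_upper_bound => //; exists g1, v1.
case: (ltrgt0P t) => ht.
- have hr : 0 < t^-1 by rewrite invr_gt0.
  have := cle _ _ (PZ _ _ _ hr Pgv).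
  have -> : rscale t^-1 v + y = rscale t^-1 (v + rscale t y).
    by rewrite rscaleDr rscaleA mulVf ?gt_eqF // rscale1.
  rewrite (pZ (ltW hr)); last by apply: hermD (Ph _ _ Pgv) (hermZ _ hy).
  move=> h.
  have : t * sup A <= t * (t^-1 * p (v + rscale t y) - t^-1 * g) by rewrite ler_pM2l.
  rewrite mulrBr !mulrA divff ?gt_eqF // !mul1r; lra.
- have hr : 0 < (- t)^-1 by rewrite invr_gt0 oppr_gt0.
  have := cge _ _ (PZ _ _ _ hr Pgv).
  have -> : rscale (- t)^-1 v - y = rscale (-t)^-1 (v + rscale t y).
    rewrite rscaleDr rscaleA -rscaleN1; congr (_ + rscale _ _).
    by rewrite invrN mulNr mulVf ?lt_eqF.
  rewrite (pZ (ltW hr)); last by apply: hermD (Ph _ _ Pgv) (hermZ _ hy).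
  move=> h.
  have : - t * ((- t)^-1 * g - (- t)^-1 * p (v + rscale t y)) <= - t * sup A.
    by rewrite ler_pM2l // oppr_gt0.
  rewrite mulrBr !mulrA divff ?oppr_eq0 ?lt_eqF // !mul1r; lra.
- by rewrite ht rscale0 addr0 mul0r addr0; apply: Pp.
Qed.

Lemma hb (I : eqType) (e : I -> M) (x0 : M) (s : seq I) :
  herm x0 -> (forall j, herm (e j)) -> uniq s ->
  exists c : I -> R, forall a (b : I -> R),
    a * p x0 + \sum_(j <- s) b j * c j <=
    p (rscale a x0 + \sum_(j <- s) rscale (b j) (e j)).
Proof.
move=> hx0 he; elim: s => [_|i s IH /= /andP[nis us]].
  exists (fun _ => 0) => a b; rewrite !big_nil !addr0.
  case: (lerP 0 a) => ha; first by rewrite pZ.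
  have h1 := pD (hermZ a hx0) (hermZ (- a) hx0).
  have h2 : p (rscale (-a) x0) = -a * p x0 by apply: pZ => //; rewrite oppr_ge0 ltW.
  rewrite -rscaleDl subrr rscale0 p0 h2 in h1.
  lra.
have [c Hc] := IH us.
pose P g v := exists a (b : I -> R), g = a * p x0 + \sum_(j <- s) b j * c j /\
   v = rscale a x0 + \sum_(j <- s) rscale (b j) (e j).
have P00 : P 0 0.
  exists 0, (fun _ => 0); rewrite mul0r rscale0 !add0r !big1 //.
  by move=> j _; rewrite rscale0.
  by move=> j _; rewrite mul0r.
have PD : forall g v g' v', P g v -> P g' v' -> P (g + g') (v + v').
  move=> g v g' v' [a [b [-> ->]]] [a' [b' [-> ->]]].
  exists (a + a'), (fun j => b j + b' j); split.
    rewrite mulrDl (_ : \sum_(j <- s) (b j + b' j) * c j = \sum_(j <- s) b j * c j + \sum_(j <- s) b' j * c j); first ring.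
    by rewrite -big_split; apply: eq_bigr => j _; rewrite mulrDl.
  rewrite rscaleDl (_ : \sum_(j <- s) rscale (b j + b' j) (e j) = \sum_(j <- s) rscale (b j) (e j) + \sum_(j <- s) rscale (b' j) (e j)).
    by rewrite -!addrA; congr (_ + _); rewrite addrCA.
  by rewrite -big_split; apply: eq_bigr => j _; rewrite rscaleDl.
have PZ : forall r g v, 0 < r -> P g v -> P (r * g) (rscale r v).
  move=> r g v _ [a [b [-> ->]]]; exists (r * a), (fun j => r * b j); split.
    by rewrite mulrDr mulr_sumr mulrA; under eq_bigr do rewrite mulrA.
  by rewrite rscaleDr rscale_sum rscaleA; under eq_bigr do rewrite rscaleA.
have Ph : forall g v, P g v -> herm v.
  move=> g v [a [b [_ ->]]]; apply: hermD; first exact: hermZ.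
  by apply: herm_sum => j; apply: hermZ.
have Pp : forall g v, P g v -> g <= p v.
  by move=> g v [a [b [-> ->]]].
have [ci Hci] := hb_step P00 PD PZ Ph Pp (he i).
exists (fun j => if j == i then ci else c j) => a b.
rewrite !big_cons eqxx.
have -> : \sum_(j <- s) b j * (if j == i then ci else c j) = \sum_(j <- s) b j * c j.
  apply: eq_big_seq => j js; case: eqP => // ji; by move: nis; rewrite -ji js.
have := Hci _ _ (b i) (ex_intro _ a (ex_intro _ b (conj erefl erefl))).
by rewrite -!addrA [b i * ci + _]addrC [rscale (b i) (e i) + _]addrC.
Qed.

End HB.

Definition Idx := ('I_n * 'I_n * bool)%type.
Definition ubas (k : Idx) : M := (if k.2 then 'i%C else 1) *: delta_mx k.1.1 k.1.2.
Definition hp (Y : M) : M := rscale (1/2) (Y + adj Y).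
Definition ebas k := hp (ubas k).
Definition coef (X : M) (k : Idx) : R :=
  if k.2 then complex.Im (X k.1.1 k.1.2) else complex.Re (X k.1.1 k.1.2).

Lemma herm_hp Y : herm (hp Y).
Proof. by rewrite hermE /hp adjZ adjD adjK addrC. Qed.

Lemma herm_ebas k : herm (ebas k).
Proof. exact: herm_hp. Qed.

Lemma hp_sum (s : seq Idx) (c : Idx -> R) (Y : Idx -> M) :
  \sum_(k <- s) rscale (c k) (hp (Y k)) = hp (\sum_(k <- s) rscale (c k) (Y k)).
Proof.
elim: s => [|a s IH]; first by rewrite !big_nil /hp adj0 addr0 rscaler0.
rewrite !big_cons IH /hp adjD adjZ rscaleA mulrC -rscaleA -rscaleDr.
by congr (rscale _ _); rewrite rscaleDr addrACA.
Qed.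

Lemma decomp_u (X : M) : X = \sum_(k : Idx) rscale (coef X k) (ubas k).
Proof.
transitivity (\sum_(p : 'I_n * 'I_n) \sum_(b : bool) rscale (coef X (p, b)) (ubas (p, b))); last first.
  by rewrite pair_bigA; apply: eq_bigr => -[p b].
rewrite {1}[X]matrix_sum_delta pair_bigA; apply: eq_bigr => -[i j] _.
rewrite big_bool /rscale /ubas /coef /= !scalerA -scalerDl; congr (_ *: _).
by case: (X i j) => x y; simpc.
Qed.

Lemma decomp (X : M) : herm X -> X = \sum_(k : Idx) rscale (coef X k) (ebas k).
Proof.
move=> hX; have hX' : adj X = X := hX.
rewrite /ebas hp_sum -decomp_u /hp hX'.
rewrite -{2 3}(rscale1 X) -rscaleDl rscaleA.
by rewrite (_ : 1 / 2 * (1 + 1) = 1 :> R) ?rscale1 //; lra.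
Qed.

Lemma ip_ebas k (X : M) : herm X -> ip (ebas k) X = coef X k.
Proof.
move=> hX; rewrite /ebas /hp ipZl ipDl /ubas adj_delta !ip_delta.
rewrite (hermP _ _ hX) /coef !conjE.
case: k => [[a b] []] /=; case: (X a b) => x y; simpc; lra.
Qed.

Section Gauge.
Variables (K F : set M) (Z0 : M).
Hypothesis Kh : forall x, K x -> herm x.
Hypothesis Kcone : coneH K.
Hypothesis Kconv : convexH K.
Hypothesis Fh : forall Z, F Z -> herm Z.
Hypothesis Dconv : convexH (downscale F).
Hypothesis FZ0 : F Z0.
Hypothesis intZ0 : interiorH K Z0.

Local Notation D := (downscale F).

Lemma dist_pert (A Y : M) e : 0 < e -> exists2 r, 0 < r & dist A (A - rscale r Y) < e.
Proof.
move=> e0; set q := ip Y Y.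
have q1 : 0 < 1 + `|q| by have := normr_ge0 q; lra.
have e2 : 0 < e ^+ 2 by rewrite exprn_gt0.
have e21 : 0 < 1 + e ^+ 2 by lra.
pose r := e ^+ 2 / ((1 + e ^+ 2) * (1 + `|q|)).
have r0 : 0 < r by rewrite divr_gt0 // mulr_gt0.
have rq : r * (1 + `|q|) = e ^+ 2 / (1 + e ^+ 2).
  by rewrite /r invfM mulrA -mulrA mulVf ?gt_eqF // mulr1.
have r1 : r * (1 + `|q|) < e ^+ 2.
  rewrite rq ltr_pdivrMr // ltr_pMr //; lra.
have rle1 : r <= 1.
  have h0 : 0 <= r * `|q| by rewrite mulr_ge0 // ltW.
  have h : r <= r * (1 + `|q|) by rewrite mulrDr mulr1; lra.
  rewrite rq in h; apply: (le_trans h).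
  rewrite ler_pdivrMr // mul1r; lra.
exists r => //.
rewrite /dist opprB addrC subrK ipZl ipZr -/q.
rewrite -(ger0_norm (ltW e0)) -sqrtr_sqr ltr_sqrt //.
have hq : q <= `|q| := ler_norm q.
have hq0 : 0 <= `|q| := normr_ge0 q.
have h1 : r * (r * q) <= r * (r * `|q|) by rewrite ler_pM2l // ler_pM2l.
have h2 : r * `|q| <= `|q| by rewrite ler_piMl.
have h3 : r * (r * `|q|) <= r * `|q| by rewrite ler_piMl // mulr_ge0 // ltW.
nra.
Qed.

Lemma KZ0 : K Z0.
Proof.
case: intZ0 => hZ0 [e e0 He]; apply: He => //.
by rewrite /dist subrr /ip mul0mx mxtrace0 sqrtr0.
Qed.

Lemma K0 : K 0.
Proof. by rewrite -(rscale0 Z0); apply: Kcone KZ0 _. Qed.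

Lemma KD a b : K a -> K b -> K (a + b).
Proof.
move=> Ka Kb.
have h : K (rscale (1/2) a + rscale (1 - 1/2) b) by apply: Kconv => //; lra.
have h2 : (0 : R) <= 2 by [].
have := Kcone h h2.
have e1 : (2 : R) * (1/2) = 1 by lra.
have e2 : (2 : R) * (1 - 1/2) = 1 by lra.
by rewrite rscaleDr !rscaleA e1 e2 !rscale1.
Qed.

Lemma K_pert (Y : M) : herm Y -> exists2 r, 0 < r & K (Z0 - rscale r Y).
Proof.
move=> hY; case: intZ0 => hZ0 [e e0 He].
have [r r0 hr] := dist_pert Z0 Y e0.
exists r => //; apply: He => //; apply: hermB => //; exact: hermZ.
Qed.

Lemma DF Z : F Z -> D Z.
Proof. by move=> FZ; exists 1, Z; rewrite rscale1; do !split => //; lra. Qed.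

Lemma D0 : D 0.
Proof. by exists 0, Z0; rewrite rscale0; do !split => //; lra. Qed.

Lemma Dh W : D W -> herm W.
Proof. by move=> [l [Z [_ [_ [FZ ->]]]]]; apply: hermZ; apply: Fh. Qed.

Definition Sg (X : M) := [set t : R | 0 < t /\ exists2 W, D W & K (rscale t W - X)].
Definition gauge (X : M) := inf (Sg X).

Lemma Sg_n0 X : herm X -> Sg X !=set0.
Proof.
move=> hX; have [r r0 Kr] := K_pert hX.
exists r^-1; split; first by rewrite invr_gt0.
exists Z0; first exact: DF.
have hr : 0 <= r^-1 by rewrite invr_ge0 ltW.
have := Kcone Kr hr.
by rewrite rscaleBr rscaleA mulVf ?gt_eqF // rscale1.
Qed.

Lemma Sg_lb X : has_lbound (Sg X).
Proof. by exists 0 => t [t0 _]; apply: ltW. Qed.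

Lemma gauge_ge0 X : herm X -> 0 <= gauge X.
Proof. by move=> hX; apply: lb_le_inf; [exact: Sg_n0|move=> t [t0 _]; exact: ltW]. Qed.

Lemma gauge_le X t : Sg X t -> gauge X <= t.
Proof. by move=> St; apply: ge_inf => //; exact: Sg_lb. Qed.

Lemma gauge_zero X : herm X -> (forall t, 0 < t -> Sg X t) -> gauge X = 0.
Proof.
move=> hX hS; apply/eqP; rewrite eq_le gauge_ge0 // andbT.
apply/ler_addgt0Pr => t t0; rewrite add0r; exact/gauge_le/hS.
Qed.

Lemma gauge0 : gauge 0 = 0.
Proof.
apply: gauge_zero; first exact: herm0.
move=> t t0; split => //; exists 0; first exact: D0.
by rewrite rscaler0 subrr; exact: K0.
Qed.

Lemma gaugeNK x : K x -> gauge (- x) = 0.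
Proof.
move=> Kx; apply: gauge_zero; first by apply: hermN; apply: Kh.
move=> t t0; split => //; exists 0; first exact: D0.
by rewrite rscaler0 sub0r opprK.
Qed.

Lemma gaugeF Z : F Z -> gauge Z <= 1.
Proof.
move=> FZ; apply: gauge_le; split => //; exists Z; first exact: DF.
by rewrite rscale1 subrr; exact: K0.
Qed.

Lemma Sg_add X Y t u : Sg X t -> Sg Y u -> Sg (X + Y) (t + u).
Proof.
move=> [t0 [W1 DW1 K1]] [u0 [W2 DW2 K2]].
have tu0 : 0 < t + u by rewrite addr_gt0.
split => //.
exists (rscale (t / (t + u)) W1 + rscale (1 - t / (t + u)) W2).
  apply: Dconv => //; first by rewrite divr_ge0 // ltW.
  by rewrite ler_pdivrMr // mul1r lerDl ltW.
have -> : rscale (t + u) (rscale (t / (t + u)) W1 + rscale (1 - t / (t + u)) W2) - (X + Y)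
   = (rscale t W1 - X) + (rscale u W2 - Y).
  have e1 : (t + u) * (t / (t + u)) = t by rewrite mulrCA divff ?gt_eqF ?mulr1.
  have e2 : (t + u) * (1 - t / (t + u)) = u.
    by rewrite mulrBr mulr1 e1; ring.
  rewrite rscaleDr !rscaleA e1 e2 opprD.
  by rewrite -!addrA; congr (_ + _); rewrite addrCA.
exact: KD.
Qed.

Lemma gaugeD X Y : herm X -> herm Y -> gauge (X + Y) <= gauge X + gauge Y.
Proof.
move=> hX hY; apply/ler_addgt0Pr => e e0.
have e2 : 0 < e / 2 by rewrite divr_gt0.
have [t St ht] := inf_adherent e2 (conj (Sg_n0 hX) (Sg_lb X)).
have [u Su hu] := inf_adherent e2 (conj (Sg_n0 hY) (Sg_lb Y)).
have := gauge_le (Sg_add St Su); rewrite /gauge; lra.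
Qed.

Lemma gaugeZ t X : 0 <= t -> herm X -> gauge (rscale t X) = t * gauge X.
Proof.
move=> t0 hX; case: (eqVneq t 0) => [->|tn0]; first by rewrite rscale0 gauge0 mul0r.
have tp : 0 < t by rewrite lt_neqAle eq_sym tn0.
have hS1 : forall u, Sg X u -> Sg (rscale t X) (t * u).
  move=> u [u0 [W DW KW]]; split; first by rewrite mulr_gt0.
  exists W => //; have := Kcone KW t0.
  by rewrite rscaleBr rscaleA.
have hS2 : forall u, Sg (rscale t X) u -> Sg X (t^-1 * u).
  move=> u [u0 [W DW KW]]; split; first by rewrite mulr_gt0 ?invr_gt0.
  have ht : 0 <= t^-1 by rewrite invr_ge0 ltW.
  exists W => //; have := Kcone KW ht.
  by rewrite rscaleBr !rscaleA mulVf // rscale1.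
have ti : 0 < t^-1 by rewrite invr_gt0.
have tt : t * t^-1 = 1 by rewrite mulfV.
apply/eqP; rewrite eq_le; apply/andP; split.
  have h : t^-1 * gauge (rscale t X) <= gauge X.
    apply: lb_le_inf; first exact: Sg_n0.
    move=> u Su; have hg := gauge_le (hS1 _ Su).
    apply: (@le_trans _ _ (t^-1 * (t * u))); first by rewrite ler_pM2l.
    by rewrite mulrA mulVf // mul1r.
  have : t * (t^-1 * gauge (rscale t X)) <= t * gauge X by rewrite ler_pM2l.
  by rewrite mulrA tt mul1r.
apply: lb_le_inf; first by apply: Sg_n0; exact: hermZ.
move=> u Su; have hg := gauge_le (hS2 _ Su).
have : t * gauge X <= t * (t^-1 * u) by rewrite ler_pM2l.
by rewrite mulrA tt mul1r.
Qed.

Lemma weak_dual (psi E : M) : (forall x, K x -> 0 <= ip psi x) ->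
  (forall Z, F Z -> ip psi Z <= 1) -> herm E -> ip psi E <= gauge E.
Proof.
move=> hK hF hE; apply: lb_le_inf; first exact: Sg_n0.
move=> t [t0 [W [l [Z [l0 [l1 [FZ ->]]]]] KW]].
have := hK _ KW; rewrite ipBr !ipZr.
have := hF _ FZ; set x := ip psi Z => hx.
have hlx : l * x <= 1 by nra.
set y := l * x in hlx *.
nra.
Qed.

Variable E : M.
Hypothesis hE : herm E.
Hypothesis NE : forall d Z, d < 1 -> F Z -> ~ K (rscale d Z - E).

Definition Lset := [set l : R | 0 <= l /\ exists2 E', K E' &
        F (rscale (1 + l)^-1 (E + rscale l E'))].

Lemma constr t eps : Sg E t -> 0 < eps -> exists2 l, Lset l & 1 + l <= t + eps.
Proof.
move=> [t0 [W DW KW]] e0.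
set t' := t + eps.
have t'0 : 0 < t' by rewrite addr_gt0.
set mu := t / t'.
have mu0 : 0 <= mu by rewrite divr_ge0 // ltW.
have mu1 : mu <= 1 by rewrite ler_pdivrMr // mul1r lerDl ltW.
have e1 : t' * mu = t by rewrite mulrCA divff ?gt_eqF ?mulr1.
have e2 : t' * (1 - mu) = eps by rewrite mulrBr mulr1 e1 /t'; ring.
have [s [Z' [s0 [s1 [FZ' eW]]]]] := Dconv DW (DF FZ0) mu0 mu1.
set k := rscale t W - E.
set u := t' * s.
have hZ' := Fh FZ'.
have eq1 : rscale u Z' - E = k + rscale eps Z0.
  rewrite /u -rscaleA -eW rscaleDr !rscaleA e1 e2 /k.
  by rewrite addrAC.
have u1 : 1 < u.
  rewrite ltNge; apply/negP => u1.
  have [r r0 Kr] := K_pert hZ'.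
  apply: (NE (d := u - eps * r) _ FZ'); first by have := mulr_gt0 e0 r0; lra.
  have -> : rscale (u - eps * r) Z' - E = k + rscale eps (Z0 - rscale r Z').
    rewrite rscaleBr rscaleA rscaleDl rscaleN -addrA [- _ - E]addrC addrA eq1.
    by rewrite -addrA.
  by apply: KD => //; apply: Kcone Kr (ltW e0).
have l0 : 0 < u - 1 by lra.
exists (u - 1).
  split; first exact: ltW.
  exists (rscale (u - 1)^-1 (rscale u Z' - E)).
    apply: Kcone; last by rewrite invr_ge0 ltW.
    by rewrite eq1; apply: KD => //; apply: Kcone KZ0 (ltW e0).
  rewrite rscaleA mulfV ?gt_eqF // rscale1 addrC subrK.
  have un0 : u != 0 by rewrite gt_eqF //; lra.
  by rewrite [E + _]addrC subrK rscaleA mulVf ?rscale1.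
rewrite (_ : 1 + (u - 1) = u); last by ring.
by rewrite /u -/t' ler_piMr // ltW.
Qed.

Lemma Lset_lb : has_lbound Lset.
Proof. by exists 0 => l []. Qed.

Lemma Lset_n0 : Lset !=set0.
Proof.
have [t St] := Sg_n0 hE.
by have [l Ll _] := constr St ltr01; exists l.
Qed.

Lemma gauge_robust : gauge E = 1 + inf Lset.
Proof.
apply/eqP; rewrite eq_le; apply/andP; split.
  rewrite -lerBlDl; apply: lb_le_inf; first exact: Lset_n0.
  move=> l [l0 [E' KE' FZ]]; rewrite lerBlDl; apply: gauge_le.
  split; first by lra.
  exists (rscale (1 + l)^-1 (E + rscale l E')); first exact: DF.
  have ne : 1 + l != 0 by rewrite gt_eqF //; lra.
  rewrite rscaleA mulfV // rscale1.
  by rewrite addrAC subrr add0r; apply: Kcone.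
apply/ler_addgt0Pr => e e0.
have e2 : 0 < e / 2 by rewrite divr_gt0.
have [t St ht] := inf_adherent e2 (conj (Sg_n0 hE) (Sg_lb E)).
have [l Ll hl] := constr St e2.
have := ge_inf Lset_lb Ll; rewrite /gauge in ht *; lra.
Qed.

End Gauge.

End P1.

Unset Implicit Arguments.

Theorem lemma3 (R : realType) (n : nat) (K F : set 'M[R[i]]_n) (E : 'M[R[i]]_n) :
  proper_cone K ->
  compactH F ->
  convexH (downscale F) ->
  (exists Z, F Z /\ interiorH K Z) ->
  Nset K F E ->
  exists2 phi, (dual_cone K phi /\ forall Z, F Z -> ip phi Z <= 1) &
    (forall psi, dual_cone K psi -> (forall Z, F Z -> ip psi Z <= 1) ->
       ip psi E <= ip phi E) /\
    (1%:E + robustness K F E = (ip phi E)%:E)%E.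
Proof.
move=> [Kh0 Kcone _ Kconv _] [Fh0 _] Dconv [Z0 [FZ0 intZ0]] [hE NE].
have Kh : forall x, K x -> herm x := fun x Kx => Kh0 x Kx.
have Fh : forall x, F x -> herm x := fun x Fx => Fh0 x Fx.
pose p := gauge K F.
have pD : forall x y, herm x -> herm y -> p (x + y) <= p x + p y.
  by move=> x y hx hy; apply: (@gaugeD _ _ K F Z0).
have pZ : forall t x, 0 <= t -> herm x -> p (rscale t x) = t * p x.
  by move=> t x ht hx; apply: (@gaugeZ _ _ K F Z0).
have [c Hc] := @hb R n p pD pZ (Idx n) (@ebas R n) E (index_enum (Idx n)) hE
   (@herm_ebas R n) (index_enum_uniq _).
pose phi := \sum_(k : Idx n) rscale (c k) (ebas R k).
have hphi : herm phi by apply: herm_sum => k; apply: hermZ; apply: herm_ebas.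
have ipphi : forall X, herm X -> ip phi X = \sum_(k : Idx n) coef X k * c k.
  move=> X hX; rewrite ip_suml; apply: eq_bigr => k _.
  by rewrite ipZl ip_ebas // mulrC.
have fle : forall X, herm X -> ip phi X <= p X.
  move=> X hX; have := Hc 0 (coef X).
  by rewrite mul0r add0r rscale0 add0r -decomp // ipphi.
have fE : ip phi E = p E.
  apply/eqP; rewrite eq_le fle //=.
  have := Hc 1 (fun k => - coef E k).
  have -> : \sum_(j <- index_enum (Idx n)) rscale (- coef E j) (ebas R j) = - E.
    rewrite [in RHS](decomp hE) -sumrN; apply: eq_bigr => k _; exact: rscaleN.
  rewrite rscale1 subrr mul1r.
  rewrite (_ : \sum_(j <- index_enum (Idx n)) - coef E j * c j = - ip phi E).
    by rewrite /p (gauge0 Kcone FZ0 intZ0); lra.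
  by rewrite ipphi // -sumrN; apply: eq_bigr => k _; rewrite mulNr.
exists phi.
  split; last first.
    by move=> Z FZ; apply: le_trans (fle _ (Fh _ FZ)) _; apply: (@gaugeF _ _ K F Z0).
  split => // x Kx.
  have := fle _ (hermN (Kh _ Kx)).
  rewrite ipNr /p (@gaugeNK _ _ K F Z0) //; lra.
split.
  move=> psi [_ hpsi] hF; rewrite fE.
  by apply: (@weak_dual _ _ K F Z0).
rewrite fE /p (@gauge_robust _ _ K F Z0) //.
rewrite /robustness.
rewrite EFinD -(@ereal_inf_EFin _ (Lset K F E)).
- by [].
- exact: Lset_lb.
- by apply: (@Lset_n0 _ _ K F Z0).
Qed.
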